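(* Let $H$ be a separated labeled hypergraph whose 1-skeleton is connected and contains an odd cycle. Then $\mathcal A[H]=k[H]$ if and only if at least one of the following holds: (1) $H$ has an odd number of vertices; (2) $H$ has an edge of even dimension, i.e., an edge with an odd number of vertices.
   Context: Let $k$ be a field and $S=k[x_1,\dots,x_n,y]$. For an integral convex polytope $\mathcal P\subseteq\mathbb R^n_{\ge 0}$, the Ehrhart ring $\mathcal A[\mathcal P]$ is the $k$-subspace of $S$ spanned by the monomials $x^{\mathbf a}y^t$ with $t\in\mathbb N$, $\mathbf a\in t\mathcal P\cap\mathbb Z^n$; the polytopal ring is $k[\mathcal P]=k[x^{\mathbf a}y:\mathbf a\in\mathcal P\cap\mathbb Z^n]$. A labeled hypergraph $H=(V,f)$ on a finite set $V$ with alphabet $\{x_1,\dots,x_n\}$ is a function $f:\{x_1,\dots,x_n\}\to\mathcal P(V)$; its edges are the nonempty sets in the image of $f$. $H$ is separated if for all distinct $v,w\in V$ there are edges $F,G$ with $v\in F\setminus G$, $w\in G\setminus F$. For separated $H$, let $x^{\mathbf a_v}=\prod_{x:\,v\in f(x)}x$ for $v\in V$, $\mathcal P_H=\mathrm{conv}\{\mathbf a_v:v\in V\}$, $\mathcal A[H]=\mathcal A[\mathcal P_H]$, $k[H]=k[\mathcal P_H]$. The dimension of an edge $E$ is $|E|-1$. The 1-skeleton of $H$ is the simple graph on $V$ whose edges are the edges of $H$ having exactly two vertices. *)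

(* Defs.v *)
From HB Require Import structures.
From mathcomp Require Import all_boot all_order all_algebra.
Set Implicit Arguments. Unset Strict Implicit. Unset Printing Implicit Defensive.
Import Order.TTheory GRing.Theory Num.Theory.
Local Open Scope ring_scope.

(* A labeled hypergraph on the finite vertex type V with alphabet
   {x_0,...,x_{n-1}} is a function f : 'I_n -> {set V}. *)

Definition is_edge (V : finType) (n : nat) (f : 'I_n -> {set V}) (E : {set V}) : Prop :=
  E != set0 /\ exists i, f i = E.

Definition separated (V : finType) (n : nat) (f : 'I_n -> {set V}) : Prop :=
  forall v w : V, v != w ->
    exists F G, is_edge f F /\ is_edge f G /\
      v \in F /\ v \notin G /\ w \in G /\ w \notin F.

(* exponent vector a_v : x^{a_v} = prod_{x : v \in f(x)} x *)
Definition avec (V : finType) (n : nat) (f : 'I_n -> {set V}) (v : V) (i : 'I_n) : nat :=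
  (v \in f i : nat).

(* a lies in t * P_H, P_H = conv{a_v : v in V} in R^n (R the real field) *)
Definition in_dilate (R : realFieldType) (V : finType) (n : nat)
    (f : 'I_n -> {set V}) (t : nat) (a : 'I_n -> nat) : Prop :=
  exists lam : V -> R,
    (forall v, 0 <= lam v) /\ \sum_v lam v = t%:R /\
    forall i, \sum_v lam v * (avec f v i)%:R = (a i)%:R.

(* Monomials x^a y^t of S = k[x_1..x_n,y] are encoded by (a, t). *)
Definition monomial (n : nat) := ({ffun 'I_n -> nat} * nat)%type.

(* Polynomials of S: finitely supported coefficient functions. *)
Definition finsupp (k : fieldType) (n : nat) (p : monomial n -> k) : Prop :=
  exists s : seq (monomial n), forall m, p m != 0 -> m \in s.

Definition kspan (k : fieldType) (n : nat) (M : monomial n -> Prop)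
    (p : monomial n -> k) : Prop :=
  finsupp p /\ forall m, p m != 0 -> M m.

Definition ehrhart_mon (R : realFieldType) (V : finType) (n : nat)
    (f : 'I_n -> {set V}) (m : monomial n) : Prop :=
  in_dilate R f m.2 m.1.

(* Monomials of k[P_H] = k[x^b y : b in P_H ∩ Z^n]: products of t generators. *)
Definition polytopal_mon (R : realFieldType) (V : finType) (n : nat)
    (f : 'I_n -> {set V}) (m : monomial n) : Prop :=
  exists b : 'I_m.2 -> ('I_n -> nat),
    (forall j, in_dilate R f 1 (b j)) /\
    forall i, m.1 i = (\sum_(j < m.2) b j i)%N.

(* A[H] and k[H] as subsets of S *)
Definition ehrhart_ring (k : fieldType) (R : realFieldType) (V : finType) (n : nat)
    (f : 'I_n -> {set V}) : (monomial n -> k) -> Prop :=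
  kspan (ehrhart_mon R f).

Definition polytopal_ring (k : fieldType) (R : realFieldType) (V : finType) (n : nat)
    (f : 'I_n -> {set V}) : (monomial n -> k) -> Prop :=
  kspan (polytopal_mon R f).

Definition skel (V : finType) (n : nat) (f : 'I_n -> {set V}) : rel V :=
  fun u v => (u != v) && [exists i, f i == [set u; v]].

Definition skel_connected (V : finType) (n : nat) (f : 'I_n -> {set V}) : Prop :=
  forall u v : V, connect (skel f) u v.

Definition skel_has_odd_cycle (V : finType) (n : nat) (f : 'I_n -> {set V}) : Prop :=
  exists c : seq V, [/\ (3 <= size c)%N, uniq c, cycle (skel f) c & odd (size c)].

(* Main.v *)
Require Import Defs.
From HB Require Import structures.
From mathcomp Require Import all_boot all_order all_algebra.
From mathcomp Require Import zify ring lra.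
Import Order.TTheory GRing.Theory Num.Theory.

Set Implicit Arguments. Unset Strict Implicit. Unset Printing Implicit Defensive.

Section Aux.
Local Open Scope ring_scope.
Variable R : realFieldType.

Definition isInt (x : R) := exists z : int, x = z%:~R.

Lemma isInt0 : isInt 0. Proof. by exists 0; rewrite mulr0z. Qed.
Lemma isIntD x y : isInt x -> isInt y -> isInt (x + y).
Proof. by move=> [a ->] [b ->]; exists (a + b); rewrite intrD. Qed.
Lemma isIntN x : isInt x -> isInt (- x).
Proof. by move=> [a ->]; exists (- a); rewrite intrN. Qed.
Lemma isIntB x y : isInt x -> isInt y -> isInt (x - y).
Proof. by move=> hx hy; apply: isIntD => //; apply: isIntN. Qed.
Lemma isIntM x y : isInt x -> isInt y -> isInt (x * y).
Proof. by move=> [a ->] [b ->]; exists (a * b); rewrite intrM. Qed.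
Lemma isInt_nat (m : nat) : isInt m%:R.
Proof. by exists m. Qed.
Lemma isInt_sign (m : nat) : isInt ((-1) ^+ m).
Proof.
elim: m => [|m IH]; first by exists 1.
by rewrite exprS; apply: isIntM => //; apply: isIntN; exists 1.
Qed.

Lemma isInt_sum (I : finType) (P : pred I) (F : I -> R) :
  (forall i, P i -> isInt (F i)) -> isInt (\sum_(i | P i) F i).
Proof.
move=> H; apply: (big_ind isInt) => //; [exact: isInt0 | exact: isIntD].
Qed.

Lemma half_int_even (m : nat) : isInt (m%:R / 2) -> ~~ odd m.
Proof.
move=> [z hz].
have : ((m : int)%:~R : R) = (2 * z)%:~R.
  by rewrite intrM -hz /= mulrC divfK ?pnatr_eq0.
move/intr_inj => h; lia.
Qed.

Lemma nonneg_int (x : R) : 0 <= x -> isInt x -> exists c : nat, x = c%:R.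
Proof.
move=> hx [z hz]; subst x; move: hx; rewrite ler0z.
by case: z => [c|c] //= _; exists c.
Qed.

Lemma half_ge (x : R) : 0 <= x -> isInt (x - 2^-1) -> 2^-1 <= x.
Proof.
move=> hx [z hz].
have [hz0|hz0] := leP 0 z.
  have : (0:R) <= z%:~R by rewrite ler0z.
  rewrite -hz; lra.
have : (z%:~R : R) <= (-1)%:~R by rewrite ler_int; lia.
rewrite -hz /=; lra.
Qed.

End Aux.

Section Main.
Local Open Scope ring_scope.
Variables (R : realFieldType) (V : finType) (n : nat) (f : 'I_n -> {set V}).

Lemma skel_edge u v : skel f u v -> exists i, u != v /\ f i = [set u; v].
Proof. by move=> /andP[huv /existsP[i /eqP hi]]; exists i. Qed.

Lemma sum_avec (lam : V -> R) i :
  \sum_v lam v * (avec f v i)%:R = \sum_(v in f i) lam v.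
Proof.
rewrite [RHS]big_mkcond /=; apply: eq_bigr => v _; rewrite /avec.
by case: (v \in f i); rewrite ?mulr1 ?mulr0.
Qed.

Lemma sum_pair (lam : V -> R) u v : u != v ->
  \sum_(w in [set u; v]) lam w = lam u + lam v.
Proof.
move=> huv; rewrite (bigD1 u) ?in_set2 ?eqxx //= (bigD1 v) /=; last first.
  by rewrite in_set2 eqxx orbT eq_sym huv.
rewrite big1 ?addr0 // => w /andP[/andP[]]; rewrite in_set2.
by case/orP => /eqP -> ; rewrite eqxx.
Qed.

Hypothesis hconn : skel_connected f.
Hypothesis hcyc : skel_has_odd_cycle f.

Lemma key (lam : V -> R) :
  (forall u v i, u != v -> f i = [set u; v] -> isInt (lam u + lam v)) ->
  (forall v, isInt (lam v)) \/ (forall v, isInt (lam v - 2^-1)).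
Proof.
move=> hE.
have hS : forall u v, skel f u v -> isInt (lam u + lam v).
  by move=> u v /skel_edge [i [huv hi]]; exact: hE hi.
case: hcyc => c [c3 _ cc oc].
case: c c3 cc oc => [//|x0 p] _ cc oc.
have alt : forall x q, path (skel f) x q ->
    isInt (lam (last x q) - (-1) ^+ (size q) * lam x).
  move=> x q; elim: q x => [|y q IH] x /=.
    by move=> _; rewrite expr0 mul1r subrr; exact: isInt0.
  move=> /andP[hxy hp].
  have := IH _ hp.
  have e : lam (last y q) - (-1) ^+ (size q).+1 * lam x =
     (lam (last y q) - (-1) ^+ (size q) * lam y) +
     (-1) ^+ (size q) * (lam x + lam y) by rewrite exprS; ring.
  rewrite e => h; apply: isIntD => //; apply: isIntM; first exact: isInt_sign.
  exact: hS.
have h2 : isInt (lam x0 + lam x0).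
  have := alt _ _ cc; rewrite last_rcons size_rcons -signr_odd.
  by move: oc => /= ->; rewrite expr1 mulN1r opprK.
have hall : forall v, isInt (lam v - lam x0).
  have gen : forall q x, path (skel f) x q -> isInt (lam x - lam x0) ->
      isInt (lam (last x q) - lam x0).
    elim=> [|y q IH] x /= => [_ //|/andP[hxy hp] hx].
    apply: (IH y hp).
    have -> : lam y - lam x0 = (lam x + lam y) - (lam x - lam x0) - (lam x0 + lam x0)
      by ring.
    by apply: isIntB; [apply: isIntB => //; exact: hS|].
  move=> v; have /connectP [q hq ->] := hconn x0 v.
  by apply: gen hq _; rewrite subrr; exact: isInt0.
move: h2 => [z hz].
have : z = 2 * (z %/ 2)%Z \/ z = 2 * (z %/ 2)%Z + 1 by lia.
set w := (z %/ 2)%Z => -[ez|ez]; [left|right] => v.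
- have -> : lam v = (lam v - lam x0) + w%:~R.
    suff -> : lam x0 = w%:~R by ring.
    move: hz; rewrite ez intrM /=; lra.
  by apply: isIntD => //; exists w.
- have -> : lam v - 2^-1 = (lam v - lam x0) + w%:~R.
    suff -> : lam x0 = w%:~R + 2^-1 by ring.
    move: hz; rewrite ez intrD intrM /=; lra.
  by apply: isIntD => //; exists w.
Qed.

Lemma dilate_key (t : nat) (a : 'I_n -> nat) (lam : V -> R) :
  (forall i, \sum_v lam v * (avec f v i)%:R = (a i)%:R) ->
  (forall v, isInt (lam v)) \/ (forall v, isInt (lam v - 2^-1)).
Proof.
move=> ha; apply: key => u v i huv hi.
by rewrite -sum_pair // -hi -sum_avec ha; exact: isInt_nat.
Qed.

Lemma half_sum (lam : V -> R) (S : {set V}) (m : nat) :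
  (forall v, isInt (lam v - 2^-1)) -> \sum_(v in S) lam v = m%:R -> ~~ odd #|S|.
Proof.
move=> hh hs; apply: (@half_int_even R).
have -> : #|S|%:R / 2 = \sum_(v in S) lam v - \sum_(v in S) (lam v - 2^-1).
  by rewrite sumrB opprB addrC subrK sumr_const -[RHS]mulr_natl mulrC.
by apply: isIntB; [rewrite hs; exact: isInt_nat | exact: isInt_sum].
Qed.

End Main.

Section Main2.
Local Open Scope ring_scope.
Variables (R : realFieldType) (V : finType) (n : nat) (f : 'I_n -> {set V}).

Lemma nat_coord (C : V -> nat) (x : nat) i :
  \sum_v (C v)%:R * ((avec f v i)%:R : R) = x%:R ->
  x = (\sum_v C v * avec f v i)%N.
Proof.
move=> h; apply/eqP; rewrite -(eqr_nat R) -h natr_sum.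
by apply/eqP; apply: eq_bigr => v _; rewrite natrM.
Qed.

Lemma half_nat (N : nat) : ~~ odd N -> (2^-1 : R) *+ N = (N./2)%:R.
Proof.
move=> hN; have e : N = (N./2 * 2)%N by rewrite muln2 even_halfK.
rewrite {1}e -(mulr_natr (2^-1 : R) (N./2 * 2)) natrM; by field.
Qed.

Lemma poly_ehr (m : monomial n) : polytopal_mon R f m -> ehrhart_mon R f m.
Proof.
case: m => a t /= [b [hb ha]].
have [L hL] := fin_all_exists hb.
exists (fun v => \sum_j L j v); split; [|split].
- by move=> v; apply: sumr_ge0 => j _; case: (hL j).
- rewrite exchange_big /=.
  rewrite (eq_bigr (fun _ => 1)); last by move=> j _; case: (hL j) => _ [].
  by rewrite sumr_const card_ord.
- move=> i; rewrite ha natr_sum.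
  rewrite (eq_bigr (fun v => \sum_j L j v * (avec f v i)%:R)); last by move=> v _; rewrite mulr_suml.
  rewrite exchange_big /=; apply: eq_bigr => j _.
  by case: (hL j) => _ [_ ->].
Qed.

Lemma parity (D : V -> nat) :
  (forall u v, skel f u v -> (D u + D v = 1)%N) -> skel_has_odd_cycle f -> False.
Proof.
move=> hD [c [c3 _ cc oc]].
have alt : forall q x, path (skel f) x q ->
    odd (D (last x q)) = odd (D x) (+) odd (size q).
  elim=> [|y q IH] x /=; first by rewrite addbF.
  move=> /andP[hxy hp]; rewrite (IH _ hp).
  have := hD _ _ hxy => /(congr1 odd); rewrite oddD /= => h.
  have -> : odd (D y) = ~~ odd (D x) by move: h; case: (odd (D x)); case: (odd (D y)).
  by case: (odd (D x)); case: (odd (size q)).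
case: c c3 cc oc => [//|x p] _ cc oc.
have := alt _ _ cc; rewrite last_rcons size_rcons.
by move: oc => /= ->; case: (odd (D x)).
Qed.

Hypothesis hconn : skel_connected f.
Hypothesis hcyc : skel_has_odd_cycle f.

Lemma card3 : exists x0 : V, (3 <= #|V|)%N.
Proof.
case: hcyc => c [c3 uc _ _]; case: c c3 uc => [//|x c'] c3 uc; exists x.
apply: leq_trans c3 _; rewrite -(card_uniqP uc); exact: max_card.
Qed.

Lemma ehr_poly (m : monomial n) :
  (odd #|V| \/ exists E : {set V}, is_edge f E /\ odd #|E|) ->
  ehrhart_mon R f m -> polytopal_mon R f m.
Proof.
move=> hodd; have [x0 _] := card3.
case: m => a t /= [lam [hl0 [hsum ha]]] /=.
case: (dilate_key hconn hcyc 0 ha) => [hint|hh]; last first.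
  exfalso; case: hodd => [hV|[E [[_ [i hi]] hE]]].
  - have := half_sum (S := [set: V]) hh (m := t).
    rewrite cardsT hV => H; suff : ~~ true by []; apply: H.
    by rewrite (eq_bigl xpredT) ?hsum // => v; rewrite in_setT.
  - have := half_sum (S := E) hh (m := a i).
    by rewrite hE -hi -sum_avec ha => /(_ erefl).
have /fin_all_exists [C hC] : forall v, exists c : nat, lam v = c%:R.
  by move=> v; apply: nonneg_int.
set s := flatten [seq nseq (C v) v | v <- enum V].
have sum_s : forall g : V -> nat, (\sum_(x <- s) g x = \sum_v C v * g v)%N.
  move=> g; rewrite big_flatten big_map big_enum /=.
  by apply: eq_bigr => v _; rewrite big_nseq iter_addn_0 mulnC.
have hsize : size s = t.
  rewrite -sum1_size sum_s; apply/eqP; rewrite -(eqr_nat R) -hsum natr_sum.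
  by apply/eqP; apply: eq_bigr => v _; rewrite muln1 hC.
subst t.
exists (fun j => avec f (nth x0 s j)); split.
- move=> j; set w := nth x0 s j.
  exists (fun v => if v == w then 1 else 0); split; [|split].
  + by move=> v; case: (v == w).
  + rewrite (bigD1 w) //= eqxx big1 ?addr0 // => v /negbTE -> //.
  + move=> i; rewrite (bigD1 w) //= eqxx mul1r big1 ?addr0 // => v /negbTE ->.
    by rewrite mul0r.
- move=> i; rewrite -(big_mkord xpredT (fun j => avec f (nth x0 s j) i)).
  rewrite -(big_nth x0 xpredT (fun x => avec f x i)) sum_s.
  apply: nat_coord; rewrite -ha; apply: eq_bigr => v _; by rewrite hC.
Qed.

End Main2.

Theorem theorem4p1 (k : fieldType) (R : realFieldType) (V : finType) (n : nat)
    (f : 'I_n -> {set V}) :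
  separated f -> skel_connected f -> skel_has_odd_cycle f ->
  ((forall p : monomial n -> k, ehrhart_ring R f p <-> polytopal_ring R f p) <->
   (odd #|V| \/ exists E : {set V}, is_edge f E /\ odd #|E|)).
Proof.
move=> _ hconn hcyc; split; last first.
  move=> hodd p; split; case=> hs hm; split => // m hm0.
  - by apply: (ehr_poly hconn hcyc) => //; exact: hm.
  - by apply: poly_ehr; exact: hm.
move=> Heq.
case: (boolP (odd #|V|)) => [hV|hV]; first by left.
case: (boolP [exists i, odd #|f i|]) => [/existsP[i hi]|hE].
  right; exists (f i); split => //; split; last by exists i.
  by apply/eqP => h; move: hi; rewrite h cards0.
exfalso.
have hE' : forall i, ~~ odd #|f i|.
  by move=> i; apply: contraNN hE => h; apply/existsP; exists i.
pose m : monomial n := ([ffun i => (#|f i|)./2], (#|V|)./2).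
have hm : ehrhart_mon R f m.
  exists (fun _ => (2^-1)%R); split; [|split].
  + by move=> _; rewrite invr_ge0 ler0n.
  + by rewrite sumr_const /= -(half_nat R hV).
  + by move=> i; rewrite sum_avec sumr_const /= ffunE -(half_nat R (hE' i)).
have hp : polytopal_mon R f m.
  pose p := fun m' : monomial n => if m' == m then (1%R : k) else 0%R.
  have : polytopal_ring R f p.
    apply/Heq; split.
      exists [:: m] => m'; rewrite /p /=; case: ifP => [/eqP -> _|_]; first by rewrite mem_seq1 eqxx.
      by rewrite eqxx.
    by move=> m'; rewrite /p /=; case: ifP => [/eqP -> _ //|_]; rewrite eqxx.
  by case=> _ /(_ m); rewrite /p /= eqxx oner_neq0 => /(_ isT).
move: hp; rewrite /m /= => -[b [hb ha]].
have hc : forall j, exists c : V -> nat, forall i, b j i = (\sum_v c v * avec f v i)%N.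
  move=> j; case: (hb j) => lam [hl0 [hsum hai]].
  case: (dilate_key hconn hcyc 0 hai) => [hint|hh].
  + have /fin_all_exists [C hC] : forall v, exists c : nat, lam v = (c%:R)%R.
      by move=> v; apply: nonneg_int.
    exists C => i; apply: (@nat_coord R); rewrite -hai; apply: eq_bigr => v _; by rewrite hC.
  + exfalso; have [_ h3] := card3 hcyc.
    have : (\sum_(v : V) (2^-1 : R) <= \sum_v lam v)%R.
      by apply: ler_sum => v _; apply: half_ge.
    rewrite hsum sumr_const (_ : (2^-1 : R) *+ _ = #|V|%:R / 2)%R; last by rewrite mulr_natl.
    have : ((3%:R : R) <= #|V|%:R)%R by rewrite ler_nat.
    lra.
have /fin_all_exists [c hc'] := hc.
pose D v := (\sum_j c j v)%N.
apply: (parity (D := D)) hcyc => u v /skel_edge [i [huv hi]].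
have := ha i; rewrite ffunE hi cards2 huv /= => h1.
have e2 : (\sum_j b j i = \sum_v D v * avec f v i)%N.
  rewrite (eq_bigr _ (fun j _ => hc' j i)) exchange_big /=.
  by apply: eq_bigr => w _; rewrite big_distrl.
have : (((\sum_v D v * avec f v i)%:R : R) = (D u + D v)%:R)%R.
  rewrite natr_sum (eq_bigr (fun w => ((D w)%:R * (avec f w i)%:R)%R)) => [|w _]; last by rewrite natrM.
  by rewrite sum_avec hi sum_pair // natrD.
by move/eqP; rewrite eqr_nat -e2 -h1 => /eqP.
Qed.
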